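(* Let $a,k,d,e,f$ be integers with $1\le a\le k$, $1\le d\le k$, $1\le f\le d$, and $e=d$ or $2e=d$. Then for all integers $m,n\ge0$, $${}_db_{dk+e,\,da+f}(m,n)-{}_db_{dk+e,\,da+f-1}(m,n)=\begin{cases}{}_d\overline{b}_{dk+e,\,dk-da+d}\big(m-(da+f-1),\,n-m\big)&\text{if } f\le e,\\ {}_d\overline{b}_{dk+e,\,dk-da}\big(m-(da+f-1),\,n-m\big)&\text{if } f>e.\end{cases}$$
   Context: Partitions are finite non-increasing sequences of positive integers; $\phi_i$ is the number of occurrences of $i$ as a part. For an integer $N$ and integers $m,n$, ${}_db_{dk+e,N}(m,n)$ is the number of partitions of $n$ into exactly $m$ parts with $\phi_i+\phi_{i+1}<dk+e$ for all $i\ge1$, $\phi_1<N$, and $d\mid\phi_{2i}$ for all $i\ge1$; ${}_d\overline{b}_{dk+e,N}(m,n)$ is the number of partitions of $n$ into exactly $m$ parts with $\phi_i+\phi_{i+1}<dk+e$ for all $i\ge1$, $\phi_1<N$, and $d\mid\phi_{2i+1}$ for all $i\ge0$. Both counts are $0$ when $m<0$ or $n<0$. *)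

(* Defs.v *)
From HB Require Import structures.
From mathcomp Require Import all_boot all_order all_algebra.
Set Implicit Arguments. Unset Strict Implicit. Unset Printing Implicit Defensive.
Import Order.TTheory GRing.Theory Num.Theory.
Local Open Scope ring_scope.

(* A partition of a natural number n is encoded by its multiplicity function:
   f : {ffun 'I_n -> 'I_n.+1}, with f j = phi_(j+1) (number of parts equal to j+1).
   Every part of a partition of n is <= n and each multiplicity is <= n, so this
   encoding is a bijection onto partitions of n (with the size constraint). *)
Definition phi (n : nat) (f : {ffun 'I_n -> 'I_n.+1}) (i : nat) : nat :=
  match insub i.-1 with
  | Some j => if (0 < i)%N then nat_of_ord (f j) else 0%N
  | None => 0%N
  end.

Definition part_size (n : nat) (f : {ffun 'I_n -> 'I_n.+1}) : nat :=
  (\sum_(j < n) (j.+1 * f j))%N.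

Definition num_parts (n : nat) (f : {ffun 'I_n -> 'I_n.+1}) : nat :=
  (\sum_(j < n) f j)%N.

(* Common conditions: |lambda| = n, exactly m parts, phi_i + phi_(i+1) < K
   for all i >= 1 (for i > n+1 both terms are 0, the same as i = n+1),
   and phi_1 < N. *)
Definition common_ok (K N : int) (m n : nat) (f : {ffun 'I_n -> 'I_n.+1}) : bool :=
  [&& part_size f == n, num_parts f == m,
      [forall i : 'I_n.+2, (0 < i)%N ==> ((phi f i + phi f i.+1)%:Z < K)]
    & (phi f 1)%:Z < N].

(* d | phi_(2i) for all i >= 1  (checked up to 2i <= n; beyond, phi = 0). *)
Definition even_div (d : int) (n : nat) (f : {ffun 'I_n -> 'I_n.+1}) : bool :=
  [forall i : 'I_n.+1, (0 < i)%N ==> (d %| (phi f (2 * i))%:Z)%Z].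

Definition odd_div (d : int) (n : nat) (f : {ffun 'I_n -> 'I_n.+1}) : bool :=
  [forall i : 'I_n.+1, (d %| (phi f (2 * i).+1)%:Z)%Z].

Definition dbcount (d K N m n : int) : nat :=
  if (m < 0) || (n < 0) then 0%N
  else #|[set f : {ffun 'I_`|n|%N -> 'I_(`|n|%N).+1} |
           common_ok K N `|m|%N f && even_div d f]|.

Definition dbbarcount (d K N m n : int) : nat :=
  if (m < 0) || (n < 0) then 0%N
  else #|[set f : {ffun 'I_`|n|%N -> 'I_(`|n|%N).+1} |
           common_ok K N `|m|%N f && odd_div d f]|.

(* Main.v *)
Require Import Defs.
From HB Require Import structures.
From mathcomp Require Import all_boot all_order all_algebra zify.
Import Order.TTheory GRing.Theory Num.Theory.
Local Open Scope ring_scope.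

Section Aux.
Local Open Scope nat_scope.

Lemma phi0 n (f : {ffun 'I_n -> 'I_n.+1}) : phi f 0 = 0.
Proof. by rewrite /phi; case: insubP. Qed.

Lemma phiS n (f : {ffun 'I_n -> 'I_n.+1}) (j : 'I_n) : phi f j.+1 = f j.
Proof. by rewrite /phi /= valK. Qed.

Lemma phi_big n (f : {ffun 'I_n -> 'I_n.+1}) i : n < i -> phi f i = 0.
Proof.
move=> hi; rewrite /phi; case: insubP => [u _ hu|] //.
by move: (ltn_ord u); rewrite hu; lia.
Qed.

Lemma phi_le n (f : {ffun 'I_n -> 'I_n.+1}) i : phi f i <= n.
Proof. rewrite /phi; case: insubP => [u _ hu|] //; case: ifP => // _; exact: leq_ord. Qed.

Lemma sum_phi n (f : {ffun 'I_n -> 'I_n.+1}) (F : nat -> nat -> nat) :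
  (forall i, F i 0 = 0) ->
  \sum_(j < n) F j.+1 (f j) = \sum_(i < n.+1) F i (phi f i).
Proof.
move=> F0; rewrite big_ord_recl phi0 F0 add0n; apply: eq_bigr => j _.
by rewrite lift0 phiS.
Qed.

Lemma sum_supp (p : nat -> nat) (F : nat -> nat -> nat) n R :
  (forall i, F i 0 = 0) -> (forall i, n < i -> p i = 0) -> n < R ->
  \sum_(i < R) F i (p i) = \sum_(i < n.+1) F i (p i).
Proof.
move=> F0 hp HR; rewrite -(subnKC HR) big_split_ord /=.
rewrite [X in _ + X]big1 ?addn0 //.
move=> i _; rewrite hp ?F0 //=; lia.
Qed.

Lemma term_le R (F : nat -> nat) i : i < R -> F i <= \sum_(j < R) F j.
Proof. by move=> H; rewrite (bigD1 (Ordinal H)) //= leq_addr. Qed.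

Lemma mk_phi n (p : nat -> nat) (f0 : {ffun 'I_n -> 'I_n.+1}) :
  p =1 phi f0 -> [ffun j : 'I_n => (inord (p j.+1) : 'I_n.+1)] = f0.
Proof.
move=> H; apply/ffunP => j; rewrite ffunE; apply/val_inj => /=.
by rewrite H phiS inordK.
Qed.

Lemma phi_mk n (p : nat -> nat) :
  (forall i, p i <= n) -> p 0 = 0 -> (forall i, n < i -> p i = 0) ->
  phi [ffun j : 'I_n => (inord (p j.+1) : 'I_n.+1)] =1 p.
Proof.
move=> hb h0 hs [|i]; first by rewrite phi0.
case: (ltnP i n) => hi.
  by rewrite (phiS _ _ (Ordinal hi)) ffunE /= inordK // ltnS.
by rewrite phi_big ?hs.
Qed.

Lemma bnd (s : nat -> nat) N : (forall i, i * s i <= N) -> s 0 = 0 ->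
  (forall i, N < i -> s i = 0) /\ (forall i, s i <= N).
Proof.
move=> H h0; split=> i.
  move=> hi; have := H i; nia.
case: i => [|i]; first by rewrite h0.
have := H i.+1; nia.
Qed.

Definition shift (p : nat -> nat) (i : nat) := if i is 0 then 0 else p i.+1.
Definition unshift (c : nat) (q : nat -> nat) (i : nat) :=
  match i with 0 => 0 | 1 => c | j.+2 => q j.+1 end.

Lemma sumA (p : nat -> nat) n :
  \sum_(i < n.+2) i * p i = \sum_(i < n.+1) i * shift p i + \sum_(i < n.+1) p i.+1.
Proof.
rewrite big_ord_recl mul0n add0n -big_split; apply: eq_bigr => i _ /=.
rewrite mulSn addnC; congr (_ + _); by case: (nat_of_ord i).
Qed.

Lemma sumB (p : nat -> nat) n :
  \sum_(i < n.+1) p i.+1 = p 1 + \sum_(i < n.+1) shift p i.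
Proof.
rewrite big_ord_recl [X in _ = _ + X]big_ord_recl /= add0n; congr (_ + _).
Qed.

Lemma sumC (p : nat -> nat) n : p 0 = 0 ->
  \sum_(i < n.+2) p i = \sum_(i < n.+1) p i.+1.
Proof.
by move=> h0; rewrite big_ord_recl h0 add0n.
Qed.

End Aux.

Lemma part_sizeE n (f : {ffun 'I_n -> 'I_n.+1}) :
  part_size f = (\sum_(i < n.+1) i * phi f i)%N.
Proof. rewrite /part_size; have := sum_phi n f (fun i x => i * x)%N (fun i => muln0 i); exact. Qed.

Lemma num_partsE n (f : {ffun 'I_n -> 'I_n.+1}) :
  num_parts f = (\sum_(i < n.+1) phi f i)%N.
Proof. rewrite /num_parts; have := sum_phi n f (fun i x => x)%N (fun i => erefl); exact. Qed.

Lemma sum_suppW (p : nat -> nat) n R :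
  (forall i, (n < i)%N -> p i = 0%N) -> (n < R)%N ->
  (\sum_(i < R) i * p i = \sum_(i < n.+1) i * p i)%N.
Proof. move=> hp hR; exact: (sum_supp p (fun i x => i * x)%N n R (fun i => muln0 i) hp hR). Qed.

Lemma sum_suppC (p : nat -> nat) n R :
  (forall i, (n < i)%N -> p i = 0%N) -> (n < R)%N ->
  (\sum_(i < R) p i = \sum_(i < n.+1) p i)%N.
Proof. move=> hp hR; exact: (sum_supp p (fun i x => x)%N n R (fun i => erefl) hp hR). Qed.

Lemma termW (s : nat -> nat) R i : (i < R)%N -> (i * s i <= \sum_(j < R) j * s j)%N.
Proof. move=> H; exact: (term_le R (fun j => j * s j)%N i H). Qed.

Lemma pairsP (K : int) n (f : {ffun 'I_n -> 'I_n.+1}) :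
  reflect (forall i, (0 < i)%N -> (phi f i + phi f i.+1)%:Z < K)
   [forall i : 'I_n.+2, (0 < i)%N ==> ((phi f i + phi f i.+1)%:Z < K)].
Proof.
apply: (iffP forallP) => [H i i0 | H i]; last by apply/implyP; exact: H.
case: (ltnP i n.+2) => hi.
  by have := H (Ordinal hi); rewrite /= i0.
have := H ord_max; rewrite /= !phi_big //; lia.
Qed.

Lemma evenP (d : int) n (f : {ffun 'I_n -> 'I_n.+1}) :
  reflect (forall i, (0 < i)%N -> (d %| (phi f (2 * i))%:Z)%Z) (even_div d f).
Proof.
apply: (iffP forallP) => [H i i0 | H i]; last by apply/implyP; exact: H.
case: (ltnP i n.+1) => hi.
  by have := H (Ordinal hi); rewrite /= i0.
rewrite phi_big; [exact: dvdz0 | lia].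
Qed.

Lemma oddP (d : int) n (f : {ffun 'I_n -> 'I_n.+1}) :
  reflect (forall i, (d %| (phi f (2 * i).+1)%:Z)%Z) (odd_div d f).
Proof.
apply: (iffP forallP) => [H i | H i]; last exact: H.
case: (ltnP i n.+1) => hi.
  by have := H (Ordinal hi).
rewrite phi_big; [exact: dvdz0 | lia].
Qed.
Lemma key (K N N' d : int) (c m n : nat) :
  c%:Z < N -> (c <= m)%N -> (m <= n)%N ->
  (forall x : nat, ((c + x)%:Z < K) && (d %| x%:Z)%Z = (x%:Z < N') && (d %| x%:Z)%Z) ->
  #|[set f : {ffun 'I_n -> 'I_n.+1} | common_ok K N m f && even_div d f && (phi f 1 == c)]|
  = #|[set g : {ffun 'I_(n - m) -> 'I_(n - m).+1} | common_ok K N' (m - c) g && odd_div d g]|.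
Proof.
move=> cN cm mn hx.
set n' := (n - m)%N.
pose F (f : {ffun 'I_n -> 'I_n.+1}) : {ffun 'I_n' -> 'I_n'.+1} :=
  [ffun j : 'I_n' => inord (shift (phi f) j.+1)].
pose G (g : {ffun 'I_n' -> 'I_n'.+1}) : {ffun 'I_n -> 'I_n.+1} :=
  [ffun j : 'I_n => inord (unshift c (phi g) j.+1)].
have hB : forall f, common_ok K N m f && even_div d f && (phi f 1 == c) ->
   common_ok K N' (m - c) (F f) && odd_div d (F f) /\ G (F f) = f.
{ move=> f /andP [/andP [ok ev] /eqP p1].
  move: ok => /and4P [/eqP hs /eqP hc /pairsP pr _].
  move/evenP: ev => ev.
  rewrite part_sizeE in hs; rewrite num_partsE in hc.
  have p0 : phi f 0 = 0%N by rewrite phi0.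
  have psupp : forall i, (n < i)%N -> phi f i = 0%N by move=> i; exact: phi_big.
  set p := phi f in hs hc pr ev p1 p0 psupp *.
  have hs2 : (\sum_(i < n.+2) i * p i)%N = n by rewrite (sum_suppW p n) //.
  have hc2 : (\sum_(i < n.+2) p i)%N = m by rewrite (sum_suppC p n) //.
  have EA := sumA p n; have EB := sumB p n; have EC := sumC p n p0.
  set s := shift p in EA EB *.
  set W := (\sum_(i < n.+1) i * s i)%N in EA.
  set T := (\sum_(i < n.+1) s i)%N in EB.
  have hW : W = n' by rewrite /n'; lia.
  have hT : T = (m - c)%N by lia.
  have ssupp : forall i, (n < i)%N -> s i = 0%N.
    by case=> [|i] // hi; rewrite /s /= psupp //; lia.
  have hle : forall i, (i * s i <= n')%N.
    move=> i; case: (ltnP i n.+1) => hi; first by rewrite -hW; exact: termW.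
    by rewrite ssupp ?muln0.
  have [s_supp s_bnd] := bnd s n' hle erefl.
  have phiF : phi (F f) =1 s by apply: phi_mk.
  split.
  - apply/andP; split.
    + apply/and4P; split.
      * rewrite part_sizeE; under eq_bigr do rewrite phiF.
        rewrite -(sum_suppW s n' n.+1) //; last by rewrite /n'; lia.
        by apply/eqP; rewrite -hW.
      * rewrite num_partsE; under eq_bigr do rewrite phiF.
        rewrite -(sum_suppC s n' n.+1) //; last by rewrite /n'; lia.
        by apply/eqP; rewrite -hT.
      * apply/pairsP => i i0; rewrite !phiF; case: i i0 => // i _.
        exact: (pr i.+2).
      * rewrite phiF /s /=.
        have h1 := pr 1%N isT; rewrite p1 in h1.
        have e2 := ev 1%N isT; rewrite muln1 in e2.
        have := hx (p 2%N); rewrite h1 e2 andbT /=.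
        by move=> /esym/andP[].
    + apply/oddP => i; rewrite phiF /s /=.
      by have := ev i.+1 isT; rewrite mulnS add2n.
  - apply: mk_phi => i.
    case: i => [|[|j]] /=; first by rewrite phi0.
      exact: (esym p1).
    by rewrite phiF.
}
have hC : forall g, common_ok K N' (m - c) g && odd_div d g ->
   common_ok K N m (G g) && even_div d (G g) && (phi (G g) 1 == c) /\ F (G g) = g.
{ move=> g /andP [ok od].
  move: ok => /and4P [/eqP hs /eqP hc /pairsP pr q1].
  move/oddP: od => od.
  rewrite part_sizeE in hs; rewrite num_partsE in hc.
  have q0 : phi g 0 = 0%N by rewrite phi0.
  have qsupp : forall i, (n' < i)%N -> phi g i = 0%N by move=> i; exact: phi_big.
  set q := phi g in hs hc pr od q1 q0 qsupp *.
  set u := unshift c q.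
  have shu : shift u =1 q by case=> [|i] //=; rewrite q0.
  have usupp1 : forall i, (n'.+1 < i)%N -> u i = 0%N.
    by case=> [|[|i]] //= hi; apply: qsupp; lia.
  have hq : (\sum_(i < n.+1) i * q i)%N = n'.
    by rewrite (sum_suppW q n') // /n'; lia.
  have hqc : (\sum_(i < n.+1) q i)%N = (m - c)%N.
    by rewrite (sum_suppC q n') // /n'; lia.
  have hu : (\sum_(i < n.+2) i * u i)%N = n.
    rewrite sumA sumB; under eq_bigr do rewrite shu.
    under [X in (_ + (_ + X))%N]eq_bigr do rewrite shu.
    rewrite hq hqc /= /n'; lia.
  have huc : (\sum_(i < n.+2) u i)%N = m.
    rewrite sumC // sumB; under eq_bigr do rewrite shu.
    rewrite hqc /=; lia.
  have hle : forall i, (i * u i <= n)%N.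
    move=> i; case: (ltnP i n.+2) => hi; first by rewrite -hu; exact: termW.
    rewrite usupp1 ?muln0 //; rewrite /n'; lia.
  have [u_supp u_bnd] := bnd u n hle erefl.
  have phiG : phi (G g) =1 u by apply: phi_mk.
  split.
  - apply/andP; split; first (apply/andP; split).
    + apply/and4P; split.
      * rewrite part_sizeE; under eq_bigr do rewrite phiG.
        by rewrite -(sum_suppW u n n.+2) // hu.
      * rewrite num_partsE; under eq_bigr do rewrite phiG.
        by rewrite -(sum_suppC u n n.+2) // huc.
      * apply/pairsP => i i0; rewrite !phiG; case: i i0 => [|[|j]] // _.
          have := od 0%N; rewrite muln0 => o1.
          by have := hx (q 1%N); rewrite q1 o1 !andbT; exact.
        exact: (pr j.+1).
      * by rewrite phiG.
    + apply/evenP => i; rewrite phiG; case: i => [|i] // _.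
      by rewrite mulnS add2n /=.
    + by rewrite phiG.
  - apply: mk_phi => i.
    by case: i => [|i] /=; [exact: (esym q0) | rewrite phiG].
}
have -> : [set g : {ffun 'I_(n - m) -> 'I_(n - m).+1} | common_ok K N' (m - c) g && odd_div d g]
   = F @: [set f : {ffun 'I_n -> 'I_n.+1} | common_ok K N m f && even_div d f && (phi f 1 == c)].
  apply/setP => g; rewrite inE; apply/idP/imsetP.
    move=> hg; have [h1 h2] := hC g hg; exists (G g); first by rewrite inE.
    by rewrite h2.
  by case=> f; rewrite inE => hf ->; have [] := hB f hf.
rewrite card_in_imset // => x y; rewrite !inE => hx' hy' Exy.
have [_ <-] := hB x hx'; have [_ <-] := hB y hy'; by rewrite Exy.
Qed.

Lemma phi1_le n (f : {ffun 'I_n -> 'I_n.+1}) : (phi f 1 <= num_parts f)%N.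
Proof.
rewrite num_partsE; case: n f => [|n] f; first by rewrite phi_big.
exact: (term_le n.+2 (phi f) 1).
Qed.

Lemma num_le n (f : {ffun 'I_n -> 'I_n.+1}) : (num_parts f <= part_size f)%N.
Proof.
rewrite num_partsE part_sizeE; apply: leq_sum => -[[|i] hi] _ /=.
  by rewrite phi0.
by rewrite leq_pmull.
Qed.

Theorem mainTheorem4 (a k d e f : int)
  (ha : 1 <= a <= k) (hd : 1 <= d <= k) (hf : 1 <= f <= d)
  (he : e = d \/ 2 * e = d) :
  forall m n : int, 0 <= m -> 0 <= n ->
    (dbcount d (d * k + e) (d * a + f) m n)%:Z
      - (dbcount d (d * k + e) (d * a + f - 1) m n)%:Z
    = (if f <= e
       then dbbarcount d (d * k + e) (d * k - d * a + d) (m - (d * a + f - 1)) (n - m)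
       else dbbarcount d (d * k + e) (d * k - d * a) (m - (d * a + f - 1)) (n - m))%:Z.
Proof.
move=> m n hm hn.
case: m hm => [mn|//] _; case: n hn => [nn|//] _.
case/andP: ha => ha1 hak; case/andP: hd => hd1 hdk; case/andP: hf => hf1 hfd.
have [cn hc] : exists cn : nat, d * a + f - 1 = cn%:Z.
  have h0 : 0 <= d * a + f - 1 by nia.
  case E: (d * a + f - 1) h0 => [cn|cn] // _; by exists cn.
have e1 : d * a + f = (cn.+1)%:Z by lia.
rewrite hc e1 /dbcount /dbbarcount /=.
have [he1 hed] : 1 <= e /\ e <= d by case: he; lia.
set K := d * k + e.
have hYX : #|[set f0 : {ffun 'I_nn -> 'I_nn.+1} | common_ok K cn.+1 mn f0 && even_div d f0]|
  = (#|[set f0 : {ffun 'I_nn -> 'I_nn.+1} | common_ok K cn mn f0 && even_div d f0]|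
     + #|[set f0 : {ffun 'I_nn -> 'I_nn.+1} | common_ok K cn.+1 mn f0 && even_div d f0 && (phi f0 1 == cn)]|)%N.
  rewrite -(cardsID [set f0 : {ffun 'I_nn -> 'I_nn.+1} | (phi f0 1 < cn)%N]).
  congr (_ + _); apply: eq_card => g; rewrite !inE /common_ok !ltz_nat;
  set P := [forall i : 'I_nn.+2, _];
  case: (ltngtP (phi g 1) cn) => h; rewrite ?ltnS ?h ?(ltnW h) ?eqxx ?(ltn_eqF h) ?(gtn_eqF h) ?leqnn ?ltnn /=;
  rewrite ?(leqNgt _ cn) ?h /=;
    by case: (part_size g == nn); case: (num_parts g == mn); case: (P); case: (even_div d g).
rewrite hYX PoszD addrAC subrr add0r.
case: (ltnP mn cn) => hmc.
  have -> : (mn%:Z - cn%:Z < 0) = true by lia.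
  rewrite if_same /=.
  have -> : [set f0 : {ffun 'I_nn -> 'I_nn.+1} | common_ok K cn.+1 mn f0 && even_div d f0 && (phi f0 1 == cn)] = set0.
    apply/setP => g; rewrite !inE; apply/negbTE; apply/negP.
    move=> /andP [/andP [/and4P [_ /eqP hnp _ _] _] /eqP h1].
    have := phi1_le nn g; lia.
  by rewrite cards0.
case: (ltnP nn mn) => hnm.
  have -> : (nn%:Z - mn%:Z < 0) = true by lia.
  rewrite orbT if_same /=.
  have -> : [set f0 : {ffun 'I_nn -> 'I_nn.+1} | common_ok K cn.+1 mn f0 && even_div d f0 && (phi f0 1 == cn)] = set0.
    apply/setP => g; rewrite !inE; apply/negbTE; apply/negP.
    move=> /andP [/andP [/and4P [/eqP hps /eqP hnp _ _] _] /eqP h1].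
    have := num_le nn g; lia.
  by rewrite cards0.
have -> : (mn%:Z - cn%:Z < 0) = false by lia.
have -> : (nn%:Z - mn%:Z < 0) = false by lia.
rewrite (subzn hmc) (subzn hnm) /=.
case: ifP => hfe; congr Posz; apply: key => //; try by rewrite ltz_nat.
  move=> x; case hdx: (d %| x%:Z)%Z; rewrite ?andbF ?andbT //.
  move/dvdzP: hdx => [y hy]; rewrite PoszD -hc hy /K.
  apply/idP/idP => H; first lia.
  have : 0 <= k - a - y by nia.
  nia.
move=> x; case hdx: (d %| x%:Z)%Z; rewrite ?andbF ?andbT //.
move/dvdzP: hdx => [y hy]; rewrite PoszD -hc hy /K.
apply/idP/idP => H; first lia.
have : 1 <= k - a - y by nia.
nia.
Qed.
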